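(* For all loop-free hybrid programs $A,B$ and every set of variables $H$: if $FV(A)\cup FV(B)\subseteq H$ and $A\equiv_H B$, then $A^*\equiv_H B^*$.
   Context: Hybrid programs and their transition semantics $[\![\cdot]\!]$ are as in differential dynamic logic ($x:=\theta$, $x:=*$, $?\phi$, $x'=\theta\,\&\,Q$, $;$, $\cup$, $^*$); a program is loop-free if it contains no $^*$. $FV(\alpha)$ is the standard $d\mathcal{L}$ set of free variables of $\alpha$ (variables whose initial value may be read by $\alpha$). States $\sigma,\sigma'$ satisfy $\sigma\approx_H\sigma'$ iff they agree on every variable in $H$. For loop-free programs, $\alpha\equiv_H\beta$ iff for all states $\sigma_0,\sigma_1$ with $(\sigma_0,\sigma_1)\in[\![\alpha]\!]$ there exist $\sigma'_0,\sigma'_1$ with $(\sigma'_0,\sigma'_1)\in[\![\beta]\!]$, $\sigma_0\approx_H\sigma'_0$ and $\sigma_1\approx_H\sigma'_1$, and symmetrically with $\alpha,\beta$ exchanged. For loops (lock-step equivalence), $\alpha^*\equiv_H\beta^*$ iff for every $n\in\mathbb{N}$ and all states $\sigma_0,\dots,\sigma_n$ with $(\sigma_i,\sigma_{i+1})\in[\![\alpha]\!]$ for all $i<n$, there exist states $\sigma'_0,\dots,\sigma'_n$ with $(\sigma'_j,\sigma'_{j+1})\in[\![\beta]\!]$ for all $j<n$ and $\sigma_k\approx_H\sigma'_k$ for all $k\le n$; and symmetrically with $\alpha,\beta$ exchanged. *)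

(* Defs.v *)
From Stdlib Require Import Reals Relations Arith.
Open Scope R_scope.

Definition var := nat.
Definition state := var -> R.

Definition upd (s : state) (x : var) (v : R) : state :=
  fun y => if Nat.eqb y x then v else s y.

Inductive term : Type :=
| TVar : var -> term
| TConst : R -> term
| TNeg : term -> term
| TPlus : term -> term -> term
| TMult : term -> term -> term.

Inductive fml : Type :=
| FTrue : fml
| FFalse : fml
| FLe : term -> term -> fml
| FLt : term -> term -> fml
| FEq : term -> term -> fml
| FNot : fml -> fml
| FAnd : fml -> fml -> fml
| FOr : fml -> fml -> fml
| FImp : fml -> fml -> fml
| FForall : var -> fml -> fml
| FExists : var -> fml -> fml.

Inductive prog : Type :=
| PAssign : var -> term -> prog
| PAssignAny : var -> prog
| PTest : fml -> prog
| PODE : var -> term -> fml -> prog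
| PSeq : prog -> prog -> prog
| PChoice : prog -> prog -> prog
| PStar : prog -> prog.

Fixpoint eval (s : state) (t : term) : R :=
  match t with
  | TVar x => s x
  | TConst c => c
  | TNeg t1 => - eval s t1
  | TPlus t1 t2 => eval s t1 + eval s t2
  | TMult t1 t2 => eval s t1 * eval s t2
  end.

Fixpoint sat (s : state) (f : fml) : Prop :=
  match f with
  | FTrue => True
  | FFalse => False
  | FLe a b => eval s a <= eval s b
  | FLt a b => eval s a < eval s b
  | FEq a b => eval s a = eval s b
  | FNot g => ~ sat s g
  | FAnd g h => sat s g /\ sat s h
  | FOr g h => sat s g \/ sat s h
  | FImp g h => sat s g -> sat s h
  | FForall x g => forall v : R, sat (upd s x v) g
  | FExists x g => exists v : R, sat (upd s x v) g
  end.

(** Transition semantics of x' = θ & Q: there is a duration r >= 0 and a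
    solution φ (given on all of R, only its behaviour on [0,r] matters; it is
    required to be differentiable at every t in [0,r], which is equivalent to
    one-sided differentiability at the endpoints of [0,r] after extension)
    starting in ω, ending in ν, staying in Q, and keeping all other variables
    constant. *)
Definition ode_sem (x : var) (th : term) (Q : fml) (w v : state) : Prop :=
  exists (r : R) (phi : R -> state),
    0 <= r /\ phi 0 = w /\ phi r = v /\
    (forall t, 0 <= t <= r ->
       sat (phi t) Q /\
       (forall y, y <> x -> phi t y = w y) /\
       derivable_pt_lim (fun s => phi s x) t (eval (phi t) th)).

Fixpoint sem (a : prog) : state -> state -> Prop :=
  match a with
  | PAssign x th => fun w v => v = upd w x (eval w th)
  | PAssignAny x => fun w v => exists c : R, v = upd w x c
  | PTest f => fun w v => v = w /\ sat w f
  | PODE x th Q => ode_sem x th Q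
  | PSeq a1 a2 => fun w v => exists m, sem a1 w m /\ sem a2 m v
  | PChoice a1 a2 => fun w v => sem a1 w v \/ sem a2 w v
  | PStar a1 => clos_refl_trans state (sem a1)
  end.

Definition vset := var -> Prop.

Fixpoint FVt (t : term) : vset :=
  match t with
  | TVar x => fun y => y = x
  | TConst _ => fun _ => False
  | TNeg t1 => FVt t1
  | TPlus t1 t2 | TMult t1 t2 => fun y => FVt t1 y \/ FVt t2 y
  end.

Fixpoint FVf (f : fml) : vset :=
  match f with
  | FTrue | FFalse => fun _ => False
  | FLe a b | FLt a b | FEq a b => fun y => FVt a y \/ FVt b y
  | FNot g => FVf g
  | FAnd g h | FOr g h | FImp g h => fun y => FVf g y \/ FVf h y
  | FForall x g | FExists x g => fun y => FVf g y /\ y <> x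
  end.

(** Must-bound variables (written on every run). *)
Fixpoint MBV (a : prog) : vset :=
  match a with
  | PAssign x _ | PAssignAny x => fun y => y = x
  | PTest _ => fun _ => False
  | PODE x _ _ => fun y => y = x
  | PSeq a1 a2 => fun y => MBV a1 y \/ MBV a2 y
  | PChoice a1 a2 => fun y => MBV a1 y /\ MBV a2 y
  | PStar _ => fun _ => False
  end.

Fixpoint FV (a : prog) : vset :=
  match a with
  | PAssign _ th => FVt th
  | PAssignAny _ => fun _ => False
  | PTest f => FVf f
  | PODE x th Q => fun y => y = x \/ FVt th y \/ FVf Q y
  | PSeq a1 a2 => fun y => FV a1 y \/ (FV a2 y /\ ~ MBV a1 y)
  | PChoice a1 a2 => fun y => FV a1 y \/ FV a2 y
  | PStar a1 => FV a1
  end.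

Fixpoint loop_free (a : prog) : Prop :=
  match a with
  | PAssign _ _ | PAssignAny _ | PTest _ | PODE _ _ _ => True
  | PSeq a1 a2 | PChoice a1 a2 => loop_free a1 /\ loop_free a2
  | PStar _ => False
  end.

Definition agree (H : vset) (s s' : state) : Prop :=
  forall y, H y -> s y = s' y.

Definition sim_H (H : vset) (a b : prog) : Prop :=
  forall s0 s1, sem a s0 s1 ->
    exists s0' s1', sem b s0' s1' /\ agree H s0 s0' /\ agree H s1 s1'.

Definition equiv_H (H : vset) (a b : prog) : Prop :=
  sim_H H a b /\ sim_H H b a.

(** One direction of lock-step equivalence α^* ≡_H β^*; sequences
    σ_0..σ_n are represented by functions nat -> state (only indices <= n
    matter). *)
Definition lockstep_sim_H (H : vset) (a b : prog) : Prop :=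
  forall (n : nat) (sg : nat -> state),
    (forall i, (i < n)%nat -> sem a (sg i) (sg (S i))) ->
    exists sg' : nat -> state,
      (forall j, (j < n)%nat -> sem b (sg' j) (sg' (S j))) /\
      (forall k, (k <= n)%nat -> agree H (sg k) (sg' k)).

(** α^* ≡_H β^* (stated in terms of the loop bodies α, β). *)
Definition star_equiv_H (H : vset) (a b : prog) : Prop :=
  lockstep_sim_H H a b /\ lockstep_sim_H H b a.

(* Main.v *)
Require Import Defs.
From Stdlib Require Import Reals Relations Arith Classical FunctionalExtensionality Lia Lra.

Lemma eval_coinc (th : term) (s s' : state) :
  (forall y, FVt th y -> s y = s' y) -> eval s th = eval s' th.
Proof.
  induction th; simpl; intros Hag; try reflexivity.
  - apply Hag; reflexivity.
  - rewrite IHth; auto.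
  - rewrite IHth1, IHth2; auto.
  - rewrite IHth1, IHth2; auto.
Qed.

Lemma sat_coinc (f : fml) : forall (s s' : state),
  (forall y, FVf f y -> s y = s' y) -> (sat s f <-> sat s' f).
Proof.
  induction f; simpl; intros s s' Hag;
  try (rewrite (eval_coinc t s s'), (eval_coinc t0 s s'); [tauto|auto|auto]);
  try tauto.
  - rewrite (IHf s s'); tauto.
  - rewrite (IHf1 s s'), (IHf2 s s'); auto; tauto.
  - rewrite (IHf1 s s'), (IHf2 s s'); auto; tauto.
  - rewrite (IHf1 s s'), (IHf2 s s'); auto; tauto.
  - split; intros Hh u; specialize (Hh u);
    [rewrite <- (IHf (upd s v u) (upd s' v u)) | rewrite (IHf (upd s v u) (upd s' v u))]; auto;
    intros y Hy; unfold upd; destruct (Nat.eqb_spec y v); auto.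
  - split; intros [u Hh]; exists u;
    [rewrite <- (IHf (upd s v u) (upd s' v u)) | rewrite (IHf (upd s v u) (upd s' v u))]; auto;
    intros y Hy; unfold upd; destruct (Nat.eqb_spec y v); auto.
Qed.

Lemma upd_same (st : state) x : upd st x (st x) = st.
Proof.
  apply functional_extensionality; intro y; unfold upd.
  destruct (Nat.eqb_spec y x); subst; auto.
Qed.

Lemma coinc (a : prog) : loop_free a -> forall (V : vset) s u0 s',
  (forall y, FV a y -> V y) -> agree V s u0 -> sem a s s' ->
  exists u0', sem a u0 u0' /\ agree (fun y => V y \/ MBV a y) s' u0'.
Proof.
  induction a; simpl; intros Hlf V s u0 s' HV Hag Hs.
  - subst s'. exists (upd u0 v (eval u0 t)). split; [reflexivity|].
    intros y Hy; unfold upd; destruct (Nat.eqb_spec y v).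
    + apply eval_coinc; intros z Hz; apply Hag, HV, Hz.
    + destruct Hy as [Hy|Hy]; [apply Hag, Hy | contradiction].
  - destruct Hs as [c ->]. exists (upd u0 v c). split; [eauto|].
    intros y Hy; unfold upd; destruct (Nat.eqb_spec y v); auto.
    destruct Hy as [Hy|Hy]; [apply Hag, Hy | contradiction].
  - destruct Hs as [-> Hs]. exists u0. split.
    + split; auto. apply (sat_coinc f s u0); auto.
    + intros y [Hy|[]]; auto.
  - destruct Hs as (r & phi & Hr & Hphi0 & Hr' & Hall).
    assert (Hvx : u0 v = s v) by (symmetry; apply Hag, HV; auto).
    set (psi := fun u => upd u0 v (phi u v)).
    exists (psi r). split.
    + exists r, psi. split; [exact Hr|]. split.
      { unfold psi; rewrite Hphi0, <- Hvx; apply upd_same. }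
      split; [reflexivity|].
      intros u Hu. destruct (Hall u Hu) as (HQ & Hc & Hd).
      assert (Hagu : forall y, FV (PODE v t f) y -> phi u y = psi u y).
      { intros y Hy; unfold psi, upd; destruct (Nat.eqb_spec y v) as [->|Hne]; [reflexivity|].
        rewrite Hc by auto. apply Hag, HV, Hy. }
      split; [|split].
      * apply (sat_coinc f (phi u)); auto. intros y Hy; apply Hagu; simpl; auto.
      * intros y Hy; unfold psi, upd; destruct (Nat.eqb_spec y v); congruence.
      * assert (Hf : (fun s0 => psi s0 v) = (fun s0 => phi s0 v)).
        { apply functional_extensionality; intro s0; unfold psi, upd; rewrite Nat.eqb_refl; auto. }
        rewrite Hf. rewrite <- (eval_coinc t (phi u)); auto.
        intros y Hy; apply Hagu; simpl; auto.
    + intros y Hy; subst s'. unfold psi, upd; destruct (Nat.eqb_spec y v); subst; auto.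
      destruct Hy as [Hy|Hy]; [|contradiction].
      destruct (Hall r) as (_ & Hc & _); [lra|].
      rewrite Hc by auto. apply Hag, Hy.
  - destruct Hlf as [Hl1 Hl2]. destruct Hs as [m [Hm1 Hm2]].
    assert (HV1 : forall y, FV a1 y -> V y) by (intros y Hy; apply HV; auto).
    destruct (IHa1 Hl1 V s u0 m HV1 Hag Hm1) as [mt [Hmt Hagm]].
    assert (HV2 : forall y, FV a2 y -> V y \/ MBV a1 y).
    { intros y Hy. destruct (classic (MBV a1 y)) as [Hm|Hm]; [right; exact Hm|]. left; apply HV; auto. }
    destruct (IHa2 Hl2 (fun y => V y \/ MBV a1 y) m mt s' HV2 Hagm Hm2) as [u0' [Ht' Hag']].
    exists u0'; split; [eauto|]. intros y Hy; apply Hag'; tauto.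
  - destruct Hlf as [Hl1 Hl2]. destruct Hs as [Hs|Hs].
    + destruct (IHa1 Hl1 V s u0 s' (fun y Hy => HV y (or_introl Hy)) Hag Hs) as [u0' [Ht' Hag']].
      exists u0'; split; auto. intros y Hy; apply Hag'; tauto.
    + destruct (IHa2 Hl2 V s u0 s' (fun y Hy => HV y (or_intror Hy)) Hag Hs) as [u0' [Ht' Hag']].
      exists u0'; split; auto. intros y Hy; apply Hag'; tauto.
  - contradiction.
Qed.

Lemma lockstep (H : vset) (A B : prog) : loop_free B ->
  (forall y, FV B y -> H y) -> sim_H H A B -> lockstep_sim_H H A B.
Proof.
  intros HlB HFV Hsim n. induction n; intros sg Hsteps.
  - exists sg. split; [intros; lia|]. intros k _ y _; reflexivity.
  - destruct (IHn sg) as [sg' [Hb Hag]]; [intros; apply Hsteps; lia|].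
    destruct (Hsim (sg n) (sg (S n))) as (s0 & s1 & Hb01 & Ha0 & Ha1); [apply Hsteps; lia|].
    destruct (coinc B HlB H s0 (sg' n) s1) as [t' [Ht' Hagt]]; auto.
    { intros y Hy. rewrite <- Ha0 by auto. apply Hag; auto. }
    exists (fun k => if Nat.leb k n then sg' k else t'). split.
    + intros j Hj. destruct (Nat.leb_spec j n); [|lia].
      destruct (Nat.leb_spec (S j) n).
      * apply Hb; lia.
      * assert (j = n) by lia; subst; exact Ht'.
    + intros k Hk. destruct (Nat.leb_spec k n).
      * apply Hag; auto.
      * assert (k = S n) by lia; subst. intros y Hy.
        rewrite Ha1 by auto. apply Hagt; auto.
Qed.

Theorem theorem2 (A B : prog) (H : vset) :
  loop_free A -> loop_free B ->
  (forall y, FV A y \/ FV B y -> H y) ->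
  equiv_H H A B ->
  star_equiv_H H A B.
Proof.
  intros HA HB HFV [H1 H2]. split; apply lockstep; auto.
Qed.
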